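(* Under Conditions 1 and 2, for every $\vartheta>0$ there exist constants $n_\vartheta\ge1$ and $\epsilon>0$ such that for all $n\ge n_\vartheta$ and all $u\in\mathbb R$ with $|u|\ge\vartheta$, $$\Big|1-\lambda^{(n)}m^{(n)}\int_0^\infty e^{\mathrm iut}\,\bar\Lambda^{(n)}_\beta(t)\,dt\Big|\ge\epsilon .$$
   Context: Notation: $\mathbb Z_+=\{1,2,\dots\}$, $\mathbb R_+=[0,\infty)$. For each $n\ge1$: $\lambda^{(n)}>0$; a probability $\Lambda^{(n)}$ on $\mathbb R_+$ with tail $\bar\Lambda^{(n)}(t)=\Lambda^{(n)}((t,\infty))$, $\eta^{(n)}=\int_0^\infty y\Lambda^{(n)}(dy)$, $\sigma^{(n)}=\frac12\int_0^\infty y^2\Lambda^{(n)}(dy)$ finite; probability laws $(p_k^{(n)})_{k\ge1}$, $(q_k^{(n)})_{k\ge1}$ on $\mathbb Z_+$ with generating functions $g^{(n)},h^{(n)}$, $m^{(n)}=\sum_kkp_k^{(n)}<\infty$; $\gamma_n>0$ with $\gamma_n\to\infty$, $\gamma_n/n\to\gamma_*\in[0,\infty)$. $\phi^{(n)}(z)=n\gamma_n[g^{(n)}(1-z/n)-(1-z/n)]$, $\psi^{(n)}(z)=\gamma_n[1-h^{(n)}(1-z/n)]$ for $z\in[0,n]$. Condition 1: (i) $\lambda^{(n)}\to\lambda>0$, $\eta^{(n)}\to\eta>0$, $\sigma^{(n)}\to\sigma>0$, $\gamma_n(1-\lambda^{(n)}\eta^{(n)})\to b\in\mathbb R$; (ii)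 $\psi^{(n)}\to\psi$ uniformly on compacts of $[0,\infty)$; (iii) $\{\phi^{(n)}\}$ is uniformly Lipschitz on bounded intervals and converges uniformly on compacts to a continuous $\phi$. Under Condition 1, $\lambda\eta=1$ and $m:=\lim_n\gamma_n(1-m^{(n)})$ exists (so $\gamma_n(1-\lambda^{(n)}\eta^{(n)}m^{(n)})\to b+m$). Condition 2 (for some $\alpha\in(1,2)$): (1) there are $C,k_0>0$ with $n\gamma_n\sum_{k\ge k_0}(k/n)^\alpha p^{(n)}_k+\sum_kk^\alpha q^{(n)}_k\le C$ for all $n$, and $\lim_{k_1\to\infty}\limsup_n\gamma_n\sum_{k\ge k_1}kp^{(n)}_k=0$; (2) there are $C_0>0$ and a probability $\Lambda^*$ on $\mathbb R_+$ with $\int t^{2\alpha}\Lambda^*(dt)<\infty$ and $\bar\Lambda^{(n)}\le C_0\bar\Lambda^*$ for all $n$. Fix $\beta\in[0,\infty)$ with $\beta>-(b+m)/(\sigma\lambda)$. Define $\bar\Lambda_\beta^{(n)}(t)=e^{-\beta t/\gamma_n}\bar\Lambda^{(n)}(t)$. *)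

(* Defs.v *)
From Stdlib Require Import Reals Lra Lia.
Open Scope R_scope.

(* Tail function t |-> Lambda((t,oo)) of a probability measure Lambda on R_+.
   Extended by 1 on (-oo,0).  Such functions are in bijection with probability
   measures on R_+ (CDF = 1 - tail). *)
Definition is_tail (F : R -> R) : Prop :=
  (forall t, 0 <= F t <= 1) /\
  (forall t, t < 0 -> F t = 1) /\
  (forall s t, s <= t -> F t <= F s) /\
  (forall t eps, 0 < eps -> exists d, 0 < d /\ forall s, t <= s < t + d -> Rabs (F s - F t) < eps) /\
  (forall eps, 0 < eps -> exists M, forall t, M <= t -> F t < eps).

Definition improper_int0 (f : R -> R) (L : R) : Prop :=
  forall eps, 0 < eps -> exists M, 0 <= M /\
    forall T, M <= T -> exists pr : Riemann_integrable f 0 T, Rabs (RiemannInt pr - L) < eps.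

Definition prob_Zplus (p : nat -> R) : Prop :=
  p 0%nat = 0 /\ (forall k, 0 <= p k) /\ infinite_sum p 1.

(* x^a for x >= 0, a > 0 (with 0^a = 0) *)
Definition powr (x a : R) : R := if Rle_dec x 0 then 0 else Rpower x a.

Definition phi_n (gam : nat -> R) (g : nat -> R -> R) (n : nat) (z : R) : R :=
  INR n * gam n * (g n (1 - z / INR n) - (1 - z / INR n)).

Definition psi_n (gam : nat -> R) (h : nat -> R -> R) (n : nat) (z : R) : R :=
  gam n * (1 - h n (1 - z / INR n)).

(* f_n -> f uniformly on compacts of [0,oo) (f_n being defined on [0,n]) *)
Definition unif_cv_compacts (f : nat -> R -> R) (lim : R -> R) : Prop :=
  forall K eps, 0 <= K -> 0 < eps -> exists N, forall n, (N <= n)%nat ->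
    forall z, 0 <= z <= K -> z <= INR n -> Rabs (f n z - lim z) < eps.

(* {f_n}_{n>=1} uniformly Lipschitz on bounded intervals of [0,oo) (f_n on [0,n]) *)
Definition unif_lipschitz_bounded (f : nat -> R -> R) : Prop :=
  forall K, 0 <= K -> exists L, forall n, (1 <= n)%nat ->
    forall z1 z2, 0 <= z1 <= K -> 0 <= z2 <= K -> z1 <= INR n -> z2 <= INR n ->
      Rabs (f n z1 - f n z2) <= L * Rabs (z1 - z2).

Definition continuous_on_Rplus (f : R -> R) : Prop :=
  forall z eps, 0 <= z -> 0 < eps -> exists d, 0 < d /\
    forall y, 0 <= y -> Rabs (y - z) < d -> Rabs (f y - f z) < eps.

(* Main.v *)
Require Import Defs.
From Stdlib Require Import Reals Lra Lia.
From Coquelicot Require Import Coquelicot.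
Open Scope R_scope.

Lemma improper_get (f : R -> R) L e : improper_int0 f L -> 0 < e ->
  exists M, 0 <= M /\ forall T, M <= T -> ex_RInt f 0 T /\ Rabs (RInt f 0 T - L) < e.
Proof.
  intros H He. destruct (H e He) as [M [HM HT]]. exists M; split; auto.
  intros T HMT. destruct (HT T HMT) as [pr Hpr]. split.
  - apply ex_RInt_Reals_1; exact pr.
  - rewrite (RInt_Reals _ _ _ pr); exact Hpr.
Qed.

Lemma exC1 (f : R -> R) a b c : a <= b <= c -> ex_RInt f a c -> ex_RInt f a b.
Proof. apply (ex_RInt_Chasles_1 (V:=R_CompleteNormedModule)). Qed.
Lemma exC2 (f : R -> R) a b c : a <= b <= c -> ex_RInt f a c -> ex_RInt f b c.
Proof. apply (ex_RInt_Chasles_2 (V:=R_CompleteNormedModule)). Qed.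
Lemma RIntC (f : R -> R) a b c : ex_RInt f a b -> ex_RInt f b c -> RInt f a b + RInt f b c = RInt f a c.
Proof. apply (RInt_Chasles (V:=R_CompleteNormedModule)). Qed.

Lemma exScal (f : R -> R) a b k : ex_RInt f a b -> ex_RInt (fun t => k * f t) a b.
Proof. intros H. apply (ex_RInt_scal (V:=R_NormedModule) f a b k H). Qed.
Lemma RIntScal (f : R -> R) a b k : ex_RInt f a b -> RInt (fun t => k * f t) a b = k * RInt f a b.
Proof. intros H. apply (RInt_scal (V:=R_CompleteNormedModule) f a b k H). Qed.

Lemma RInt_le_const (f : R -> R) a b c : a <= b -> ex_RInt f a b ->
  (forall x, a < x < b -> f x <= c) -> RInt f a b <= (b - a) * c.
Proof.
  intros Hab Hf H.
  replace ((b-a)*c) with (RInt (fun _ => c) a b).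
  - apply RInt_le; auto. apply ex_RInt_const.
  - rewrite RInt_const. reflexivity.
Qed.

Lemma tail_lower (F : R -> R) eta sig :
  is_tail F -> improper_int0 F eta -> improper_int0 (fun t => t * F t) sig ->
  forall a kap M e, 0 < a -> a <= M -> 0 <= kap -> 0 < e ->
  a + kap * M + (sig + 1) / M + e <= eta -> kap <= F a.
Proof.
  intros [HF01 [_ [Hmon _]]] HI HS a kap M e Ha HaM Hk He Hsum.
  destruct (Rle_or_lt kap (F a)) as [Hc|Hc]; [exact Hc|exfalso].
  destruct (improper_get _ _ _ HI He) as [M1 [HM1 HT1]].
  destruct (improper_get _ _ _ HS Rlt_0_1) as [M2 [HM2 HT2]].
  set (T := Rmax (Rmax M M1) M2).
  assert (HMT : M <= T) by (unfold T; apply Rle_trans with (Rmax M M1); apply Rmax_l).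
  assert (HM1T : M1 <= T) by (unfold T; apply Rle_trans with (Rmax M M1); [apply Rmax_r|apply Rmax_l]).
  assert (HM2T : M2 <= T) by (unfold T; apply Rmax_r).
  destruct (HT1 T HM1T) as [ExF HF]. destruct (HT2 T HM2T) as [ExS HS2].
  assert (ExF1 : ex_RInt F 0 a) by (apply exC1 with T; [lra|assumption]).
  assert (ExF2' : ex_RInt F a T) by (apply exC2 with 0; [lra|assumption]).
  assert (ExF2 : ex_RInt F a M) by (apply exC1 with T; [lra|assumption]).
  assert (ExF3 : ex_RInt F M T) by (apply exC2 with a; [lra|assumption]).
  assert (ExS1 : ex_RInt (fun t => t * F t) 0 M) by (apply exC1 with T; [lra|assumption]).
  assert (ExS2 : ex_RInt (fun t => t * F t) M T) by (apply exC2 with 0; [lra|assumption]).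
  assert (E1 : RInt F 0 T = RInt F 0 a + (RInt F a M + RInt F M T)).
  { rewrite <- (RIntC F 0 a T) by auto. rewrite <- (RIntC F a M T) by auto. reflexivity. }
  assert (E2 : RInt (fun t => t * F t) 0 T = RInt (fun t => t * F t) 0 M + RInt (fun t => t * F t) M T).
  { rewrite <- (RIntC _ 0 M T) by auto. reflexivity. }
  assert (B1 : RInt F 0 a <= (a - 0) * 1).
  { apply RInt_le_const; auto; try lra. intros x _; apply HF01. }
  assert (B2 : RInt F a M <= (M - a) * kap).
  { apply RInt_le_const; auto. intros x Hx. apply Rle_trans with (F a); [apply Hmon; lra|lra]. }
  assert (S0 : 0 <= RInt (fun t => t * F t) 0 M).
  { apply RInt_ge_0; auto; try lra. intros x Hx. apply Rmult_le_pos; [lra|apply HF01]. }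
  assert (HM0 : 0 < M) by lra.
  assert (B3 : RInt F M T <= / M * RInt (fun t => t * F t) M T).
  { rewrite <- (RIntScal (fun t => t * F t) M T (/ M)) by auto.
    apply RInt_le; auto; [apply exScal; auto|].
    intros x Hx.
    destruct (HF01 x) as [H0 _].
    apply Rmult_le_reg_l with M; auto. rewrite <- Rmult_assoc, Rinv_r by lra.
    rewrite Rmult_1_l. apply Rmult_le_compat_r; lra. }
  assert (B4 : / M * RInt (fun t => t * F t) M T <= (sig + 1) / M).
  { unfold Rdiv. rewrite Rmult_comm. apply Rmult_le_compat_r.
    - left; apply Rinv_0_lt_compat; lra.
    - apply Rabs_def2 in HS2. lra. }
  apply Rabs_def2 in HF.
  assert (kap * M >= (M - a) * kap) by (apply Rle_ge; rewrite Rmult_comm; apply Rmult_le_compat_l; lra).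
  lra.
Qed.
Lemma sin_ub5 x : 0 <= x <= 2 -> sin x <= x - x^3/6 + x^5/120.
Proof.
  intros Hx. assert (HP : 2 <= PI) by (pose proof PI_4; pose proof PI2_3_2; lra).
  destruct (SIN x) as [_ H]; try lra.
  unfold sin_ub, sin_approx, sin_term in H. cbn [sum_f_R0] in H.
  cbn [Nat.mul Nat.add] in H.
  change (Factorial.fact 9) with (9 * (8 * Factorial.fact 7))%nat in H.
  rewrite !mult_INR in H.
  assert (F7 : 0 < INR (Factorial.fact 7)) by (apply lt_0_INR; apply Factorial.lt_O_fact).
  replace (INR (Factorial.fact 1)) with 1 in H by reflexivity.
  replace (INR (Factorial.fact 3)) with 6 in H by (simpl; ring).
  replace (INR (Factorial.fact 5)) with 120 in H by (simpl; ring).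
  replace (INR 9) with 9 in H by (simpl; ring).
  replace (INR 8) with 8 in H by (simpl; ring).
  set (f := INR (Factorial.fact 7)) in *.
  assert (x^2 <= 4) by nra.
  assert (0 <= x^7) by (apply pow_le; lra).
  assert (E: x^9 / (9*(8*f)) = (x^7/f) * (x^2/72)) by (field; lra).
  assert (0 <= x^7/f) by (unfold Rdiv; apply Rmult_le_pos; [lra|left; apply Rinv_0_lt_compat; lra]).
  simpl pow in H at 1 2 3 4 5. rewrite E in H.
  nra.
Qed.
Lemma sinc_bound x0 : 0 < x0 -> exists d, 0 < d /\ forall x, x0 <= x -> sin x / x <= 1 - d.
Proof.
  intros Hx0. exists (Rmin (1/2) (2*x0^2/15)). split.
  - apply Rmin_glb_lt; [lra|]. assert (0 < x0^2) by (apply pow_lt; lra). lra.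
  - intros x Hx. assert (Hxp : 0 < x) by lra.
    apply Rmult_le_reg_r with x; auto. unfold Rdiv. rewrite Rmult_assoc, Rinv_l by lra.
    rewrite Rmult_1_r.
    destruct (Rle_or_lt 2 x) as [H2|H2].
    + pose proof (SIN_bound x) as [_ Hs]. pose proof (Rmin_l (1/2) (2*x0^2/15)). nra.
    + pose proof (sin_ub5 x (conj (Rlt_le _ _ Hxp) (Rlt_le _ _ H2))) as Hs.
      pose proof (Rmin_r (1/2) (2*x0^2/15)).
      set (m := Rmin (1/2) (2*x0^2/15)) in *.
      assert (x0^2 <= x^2) by (apply pow_incr; lra).
      assert (x^2 <= 2^2) by (apply pow_incr; lra).
      assert (0 <= x^3) by (apply pow_le; lra).
      assert (x^5 = x^3 * x^2) by ring.
      assert (x^3 * x^2 <= x^3 * 2^2) by (apply Rmult_le_compat_l; lra).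
      assert (m * x <= 2*x0^2/15 * x) by (apply Rmult_le_compat_r; lra).
      assert (x0^2 * x <= x^2 * x) by (apply Rmult_le_compat_r; lra).
      assert (x^3 = x^2*x) by ring.
      change (Rmin (1 * / 2) (2 * x0 ^ 2 * / 15)) with m. lra.
Qed.

Lemma int_1mcos u a : u <> 0 -> is_RInt (fun t => 1 - cos (u*t)) 0 a (a - sin (u*a)/u).
Proof.
  intros Hu.
  replace (a - sin (u*a)/u) with (minus ((fun t => t - sin (u*t)/u) a) ((fun t => t - sin (u*t)/u) 0)).
  2:{ unfold minus, plus, opp; simpl. rewrite Rmult_0_r, sin_0. field. auto. }
  apply (is_RInt_derive (V:=R_CompleteNormedModule) (fun t => t - sin (u*t)/u)).
  - intros x _. auto_derive; auto. field. auto.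
  - intros x _. apply (continuous_minus (K:=R_AbsRing) (V:=R_NormedModule)).
    apply continuous_const. apply continuous_comp with (f := fun t => u*t) (g := cos).
    apply (continuous_scal_r (K:=R_AbsRing) (V:=R_NormedModule)). apply continuous_id.
    apply continuous_cos.
Qed.

Lemma exp_le x y : x <= y -> exp x <= exp y.
Proof. intros [H|H]; [left; apply exp_increasing; auto| subst; lra]. Qed.

Lemma RIntMinus (f g : R -> R) a b : ex_RInt f a b -> ex_RInt g a b ->
  RInt (fun t => f t - g t) a b = RInt f a b - RInt g a b.
Proof. intros. apply (RInt_minus (V:=R_CompleteNormedModule)); auto. Qed.
Lemma exMinus (f g : R -> R) a b : ex_RInt f a b -> ex_RInt g a b ->
  ex_RInt (fun t => f t - g t) a b.
Proof. intros. apply (ex_RInt_minus (V:=R_NormedModule)); auto. Qed.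

Lemma main_est (F : R -> R) eta A u beta g a kap :
  is_tail F -> improper_int0 F eta ->
  improper_int0 (fun t => cos (u*t) * (exp (- beta * t / g) * F t)) A ->
  0 <= beta -> 1 <= g -> 0 < a -> 0 <= kap -> kap <= F a -> u <> 0 ->
  A <= eta - kap * exp (- beta * a) * (a - sin (u*a)/u).
Proof.
  intros [HF01 [_ [Hmon _]]] HI HA Hb Hg Ha Hk Hka Hu.
  set (K := kap * exp (- beta * a)).
  set (I := a - sin (u*a)/u).
  set (G := fun t => cos (u*t) * (exp (- beta * t / g) * F t)).
  assert (HK : 0 <= K) by (unfold K; apply Rmult_le_pos; [lra|left; apply exp_pos]).
  apply Rle_plus_epsilon. intros eps Heps.
  assert (He : 0 < eps/2) by lra.
  destruct (improper_get _ _ _ HI He) as [M1 [HM1 HT1]].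
  destruct (improper_get _ _ _ HA He) as [M2 [HM2 HT2]].
  set (T := Rmax (Rmax a M1) M2).
  assert (HaT : a <= T) by (unfold T; apply Rle_trans with (Rmax a M1); apply Rmax_l).
  assert (HM1T : M1 <= T) by (unfold T; apply Rle_trans with (Rmax a M1); [apply Rmax_r|apply Rmax_l]).
  assert (HM2T : M2 <= T) by (unfold T; apply Rmax_r).
  destruct (HT1 T HM1T) as [ExF HF]. destruct (HT2 T HM2T) as [ExG HG].
  fold G in ExG, HG.
  assert (ExF1 : ex_RInt F 0 a) by (apply exC1 with T; [lra|assumption]).
  assert (ExF2 : ex_RInt F a T) by (apply exC2 with 0; [lra|assumption]).
  assert (ExG1 : ex_RInt G 0 a) by (apply exC1 with T; [lra|assumption]).
  assert (ExG2 : ex_RInt G a T) by (apply exC2 with 0; [lra|assumption]).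
  assert (EF : RInt F 0 a + RInt F a T = RInt F 0 T) by (apply RIntC; auto).
  assert (EG : RInt G 0 a + RInt G a T = RInt G 0 T) by (apply RIntC; auto).
  assert (HC := int_1mcos u a Hu).
  assert (ExC : ex_RInt (fun t => 1 - cos (u*t)) 0 a) by (eexists; exact HC).
  assert (EC : RInt (fun t => 1 - cos (u*t)) 0 a = I) by (apply (is_RInt_unique (V:=R_CompleteNormedModule)); exact HC).
  assert (ExKC : ex_RInt (fun t => K * (1 - cos (u*t))) 0 a) by (apply exScal; auto).
  assert (B1 : RInt G 0 a <= RInt F 0 a - K * I).
  { rewrite <- EC, <- (RIntScal _ _ _ K ExC), <- (RIntMinus F _ 0 a ExF1 ExKC).
    apply RInt_le; [lra|auto|apply exMinus; auto|].
    intros t Ht. unfold G.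
    destruct (HF01 t) as [F0 F1].
    assert (Fk : kap <= F t) by (apply Rle_trans with (F a); [auto|apply Hmon; lra]).
    assert (W1 : exp (- beta * t / g) <= 1).
    { rewrite <- exp_0. apply exp_le. unfold Rdiv.
      assert (0 <= beta * t * / g) by (apply Rmult_le_pos; [nra|left; apply Rinv_0_lt_compat; lra]).
      lra. }
    assert (W2 : exp (- beta * a) <= exp (- beta * t / g)).
    { apply exp_le.
      assert (beta * t / g <= beta * t).
      { assert (0 <= beta * t) by nra.
        replace (beta * t / g) with ((beta * t) * / g) by reflexivity.
        assert (0 < / g <= 1).
        { split; [apply Rinv_0_lt_compat; lra|]. rewrite <- Rinv_1. apply Rinv_le_contravar; lra. }
        nra. }
      assert (beta * t <= beta * a) by nra.
      unfold Rdiv in *. lra. }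
    set (w := exp (- beta * t / g)) in *.
    assert (Hwk : K <= w * F t).
    { unfold K. rewrite Rmult_comm. apply Rmult_le_compat; try lra. left; apply exp_pos. }
    pose proof (COS_bound (u*t)) as [C1 C2].
    assert (0 <= F t * (1 - w)) by nra.
    assert (0 <= (1 - cos (u*t)) * (w * F t - K)) by nra.
    nra. }
  assert (B2 : RInt G a T <= RInt F a T).
  { apply RInt_le; auto. intros t Ht. unfold G.
    destruct (HF01 t) as [F0 F1].
    assert (W1 : exp (- beta * t / g) <= 1).
    { rewrite <- exp_0. apply exp_le. unfold Rdiv.
      assert (0 <= beta * t * / g) by (apply Rmult_le_pos; [nra|left; apply Rinv_0_lt_compat; lra]).
      lra. }
    assert (W0 := exp_pos (- beta * t / g)).
    set (w := exp (- beta * t / g)) in *.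
    pose proof (COS_bound (u*t)) as [C1 C2].
    assert (0 <= w * F t) by nra.
    assert (w * F t <= F t) by nra.
    nra. }
  apply Rabs_def2 in HF. apply Rabs_def2 in HG.
  lra.
Qed.

Lemma cv_div_infty (gam x : nat -> R) l :
  Un_cv (fun n => gam n * x n) l -> cv_infty gam -> Un_cv x 0.
Proof.
  intros Hc Hg eps Heps.
  destruct (Hc 1 Rlt_0_1) as [N1 HN1].
  destruct (Hg ((Rabs l + 1) / eps)) as [N2 HN2].
  exists (Nat.max N1 N2). intros n Hn.
  assert (H1 := HN1 n ltac:(lia)). assert (H2 := HN2 n ltac:(lia)).
  unfold R_dist in *. rewrite Rminus_0_r.
  assert (Hl : 0 <= Rabs l) by apply Rabs_pos.
  assert (Hq : 0 < (Rabs l + 1) / eps) by (apply Rdiv_lt_0_compat; lra).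
  assert (Hgp : 0 < gam n) by lra.
  assert (Hb : Rabs (gam n * x n) < Rabs l + 1).
  { pose proof (Rabs_triang_inv (gam n * x n) l). lra. }
  rewrite Rabs_mult, (Rabs_pos_eq (gam n)) in Hb by lra.
  apply Rmult_lt_reg_l with (gam n); auto.
  apply Rlt_trans with (Rabs l + 1); auto.
  apply Rmult_lt_reg_r with (/ eps). apply Rinv_0_lt_compat; auto.
  rewrite Rmult_assoc, Rinv_r, Rmult_1_r by lra. exact H2.
Qed.
Lemma Ilow (u a theta d : R) : 0 < a -> 0 < theta -> theta <= Rabs u ->
  (forall x, theta * a <= x -> sin x / x <= 1 - d) -> a * d <= a - sin (u*a)/u.
Proof.
  intros Ha Ht Hu Hd.
  assert (Hx : theta * a <= Rabs u * a) by (apply Rmult_le_compat_r; lra).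
  assert (Hs := Hd _ Hx).
  assert (Hup : 0 < Rabs u) by lra.
  assert (Hu0 : u <> 0) by (intro Z; rewrite Z, Rabs_R0 in Hup; lra).
  assert (E : sin (u*a)/u = a * (sin (Rabs u * a) / (Rabs u * a))).
  { destruct (Rle_or_lt 0 u) as [H|H].
    - rewrite Rabs_pos_eq by lra. field; split; auto; lra.
    - rewrite Rabs_left by lra. replace (- u * a) with (- (u*a)) by ring.
      rewrite sin_neg. field; split; auto; lra. }
  rewrite E. nra.
Qed.

Theorem proposition5p10
  (lam : nat -> R) (barL : nat -> R -> R) (eta_n sigma_n : nat -> R)
  (p q : nat -> nat -> R) (g h : nat -> R -> R) (mm : nat -> R)
  (gam : nat -> R) (gstar : R)
  (lam0 eta0 sigma0 b : R) (psi phi : R -> R) (mlim : R)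
  (alpha beta : R)
  (* standing assumptions *)
  (Hlam_pos : forall n, (1 <= n)%nat -> 0 < lam n)
  (HbarL : forall n, (1 <= n)%nat -> is_tail (barL n))
  (Heta : forall n, (1 <= n)%nat -> improper_int0 (barL n) (eta_n n))
  (Hsigma : forall n, (1 <= n)%nat -> improper_int0 (fun t => t * barL n t) (sigma_n n))
  (Hp : forall n, (1 <= n)%nat -> prob_Zplus (p n))
  (Hq : forall n, (1 <= n)%nat -> prob_Zplus (q n))
  (Hg : forall n s, (1 <= n)%nat -> 0 <= s <= 1 -> infinite_sum (fun k => p n k * s ^ k) (g n s))
  (Hh : forall n s, (1 <= n)%nat -> 0 <= s <= 1 -> infinite_sum (fun k => q n k * s ^ k) (h n s))
  (Hm : forall n, (1 <= n)%nat -> infinite_sum (fun k => INR k * p n k) (mm n))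
  (Hgam_pos : forall n, (1 <= n)%nat -> 0 < gam n)
  (Hgam_inf : cv_infty gam)
  (Hgstar : Un_cv (fun n => gam n / INR n) gstar) (Hgstar0 : 0 <= gstar)
  (* Condition 1 *)
  (H1lam : Un_cv lam lam0) (H1lam0 : 0 < lam0)
  (H1eta : Un_cv eta_n eta0) (H1eta0 : 0 < eta0)
  (H1sigma : Un_cv sigma_n sigma0) (H1sigma0 : 0 < sigma0)
  (H1b : Un_cv (fun n => gam n * (1 - lam n * eta_n n)) b)
  (H1psi : unif_cv_compacts (psi_n gam h) psi)
  (H1phi_lip : unif_lipschitz_bounded (phi_n gam g))
  (H1phi_cv : unif_cv_compacts (phi_n gam g) phi)
  (H1phi_cont : continuous_on_Rplus phi)
  (* m := lim gamma_n (1 - m^(n)) (exists under Condition 1) *)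
  (Hmlim : Un_cv (fun n => gam n * (1 - mm n)) mlim)
  (* Condition 2 *)
  (H2alpha : 1 < alpha < 2)
  (H2a : exists C (k0 : nat), 0 < C /\ (0 < k0)%nat /\
     forall n N, (1 <= n)%nat ->
       INR n * gam n * sum_f_R0 (fun k => if Nat.leb k0 k
                                          then Rpower (INR k / INR n) alpha * p n k else 0) N
       + sum_f_R0 (fun k => powr (INR k) alpha * q n k) N <= C)
  (H2b : forall eps, 0 < eps -> exists K1 : nat, forall k1 : nat, (K1 <= k1)%nat ->
     exists N0 : nat, forall n, (N0 <= n)%nat -> forall N,
       gam n * sum_f_R0 (fun k => if Nat.leb k1 k then INR k * p n k else 0) N <= eps)
  (H2c : exists (C0 : R) (barstar : R -> R), 0 < C0 /\ is_tail barstar /\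
     (exists M, improper_int0 (fun t => 2 * alpha * powr t (2 * alpha - 1) * barstar t) M) /\
     forall n t, (1 <= n)%nat -> 0 <= t -> barL n t <= C0 * barstar t)
  (* beta *)
  (Hbeta0 : 0 <= beta)
  (Hbeta : - (b + mlim) / (sigma0 * lam0) < beta) :
  forall theta, 0 < theta ->
    exists (ntheta : nat) (eps : R), (1 <= ntheta)%nat /\ 0 < eps /\
      forall n, (ntheta <= n)%nat -> forall u, theta <= Rabs u ->
        forall A B,
          improper_int0 (fun t => cos (u * t) * (exp (- beta * t / gam n) * barL n t)) A ->
          improper_int0 (fun t => sin (u * t) * (exp (- beta * t / gam n) * barL n t)) B ->
          eps <= sqrt ((1 - lam n * mm n * A) ^ 2 + (lam n * mm n * B) ^ 2).
Proof.
  intros theta Htheta.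
  assert (Hm0 : Un_cv (fun n => 1 - mm n) 0) by (apply cv_div_infty with gam mlim; auto).
  assert (Hle0 : Un_cv (fun n => 1 - lam n * eta_n n) 0) by (apply cv_div_infty with gam b; auto).
  assert (Hm1 : Un_cv mm 1).
  { intros e He. destruct (Hm0 e He) as [N HN]. exists N. intros n Hn.
    specialize (HN n Hn). unfold R_dist in *. rewrite Rminus_0_r in HN.
    rewrite <- Rabs_Ropp. replace (- (mm n - 1)) with (1 - mm n) by ring. auto. }
  assert (Hle1 : Un_cv (fun n => lam n * eta_n n) 1).
  { intros e He. destruct (Hle0 e He) as [N HN]. exists N. intros n Hn.
    specialize (HN n Hn). unfold R_dist in *. rewrite Rminus_0_r in HN.
    rewrite <- Rabs_Ropp. replace (- (lam n * eta_n n - 1)) with (1 - lam n * eta_n n) by ring. auto. }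
  assert (Hc : Un_cv (fun n => lam n * mm n) (lam0 * 1)) by (apply CV_mult; auto).
  assert (Hce : Un_cv (fun n => lam n * eta_n n * mm n) (1 * 1)) by (apply CV_mult; auto).
  rewrite Rmult_1_r in Hc, Hce.
  set (a := eta0 / 8).
  set (M := Rmax a (8 * (sigma0 + 2) / eta0)).
  assert (Ha : 0 < a) by (unfold a; lra).
  assert (HaM : a <= M) by apply Rmax_l.
  assert (HM0 : 0 < M) by lra.
  set (kap := eta0 / (8 * M)).
  assert (Hkap : 0 < kap) by (unfold kap; apply Rdiv_lt_0_compat; lra).
  set (K := kap * exp (- beta * a)).
  assert (HK : 0 < K) by (unfold K; apply Rmult_lt_0_compat; [lra|apply exp_pos]).
  assert (Hx0 : 0 < theta * a) by nra.
  destruct (sinc_bound _ Hx0) as [d [Hd Hsinc]].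
  set (eps := lam0 * K * a * d / 4).
  assert (Heps : 0 < eps).
  { unfold eps. assert (0 < lam0 * K) by nra. assert (0 < lam0 * K * a) by nra.
    assert (0 < lam0 * K * a * d) by nra. lra. }
  destruct (Hc (lam0/2) ltac:(lra)) as [N1 HN1].
  destruct (Hce eps Heps) as [N2 HN2].
  destruct (H1eta (eta0/2) ltac:(lra)) as [N3 HN3].
  destruct (H1sigma 1 Rlt_0_1) as [N4 HN4].
  destruct (Hgam_inf 1) as [N5 HN5].
  exists (S (Nat.max N1 (Nat.max N2 (Nat.max N3 (Nat.max N4 N5))))), eps.
  split; [lia|split; [exact Heps|]].
  intros n Hn u Hu A B HA HB.
  assert (Hn1 : (1 <= n)%nat) by lia.
  specialize (HN1 n ltac:(lia)). specialize (HN2 n ltac:(lia)).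
  specialize (HN3 n ltac:(lia)). specialize (HN4 n ltac:(lia)).
  specialize (HN5 n ltac:(lia)).
  unfold R_dist in *.
  apply Rabs_def2 in HN1. apply Rabs_def2 in HN2. apply Rabs_def2 in HN3. apply Rabs_def2 in HN4.
  assert (Hkapa : kap <= barL n a).
  { apply (tail_lower (barL n) (eta_n n) (sigma_n n) (HbarL n Hn1) (Heta n Hn1) (Hsigma n Hn1)
            a kap M (eta0/8)); try lra.
    assert (E1 : kap * M = eta0 / 8) by (unfold kap; field; lra).
    assert (E2 : (sigma_n n + 1) / M <= eta0 / 8).
    { apply Rle_trans with ((sigma0 + 2) / M).
      - unfold Rdiv. apply Rmult_le_compat_r; [left; apply Rinv_0_lt_compat; lra|lra].
      - assert (HM8 : 8 * (sigma0 + 2) / eta0 <= M) by apply Rmax_r.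
        apply Rmult_le_reg_r with (8 * M / eta0). apply Rdiv_lt_0_compat; lra.
        replace ((sigma0 + 2) / M * (8 * M / eta0)) with (8 * (sigma0 + 2) / eta0) by (field; lra).
        replace (eta0 / 8 * (8 * M / eta0)) with M by (field; lra). exact HM8. }
    unfold a in *. lra. }
  assert (Hu0 : u <> 0).
  { intro Z. rewrite Z, Rabs_R0 in Hu. lra. }
  assert (HAle := main_est (barL n) (eta_n n) A u beta (gam n) a kap (HbarL n Hn1) (Heta n Hn1) HA
                    Hbeta0 ltac:(lra) Ha ltac:(lra) Hkapa Hu0).
  fold K in HAle.
  assert (HI := Ilow u a theta d Ha Htheta Hu Hsinc).
  set (I := a - sin (u*a)/u) in *.
  set (c := lam n * mm n) in *.
  assert (Hcp : lam0 / 2 < c) by lra.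
  assert (HKI : K * (a * d) <= K * I) by (apply Rmult_le_compat_l; lra).
  assert (HcA : c * A <= c * (eta_n n - K * I)) by (apply Rmult_le_compat_l; lra).
  assert (Hce' : c * eta_n n = lam n * eta_n n * mm n) by (unfold c; ring).
  assert (HcK : lam0 / 2 * (K * (a * d)) <= c * (K * (a * d))).
  { apply Rmult_le_compat_r; [|lra]. assert (0 < a * d) by nra. nra. }
  assert (HcK2 : c * (K * (a * d)) <= c * (K * I)) by (apply Rmult_le_compat_l; lra).
  assert (Hmain : eps <= 1 - c * A).
  { assert (E : 2 * eps = lam0 / 2 * (K * (a * d))) by (unfold eps; field).
    assert (E2 : c * (eta_n n - K * I) = c * eta_n n - c * (K * I)) by ring.
    lra. }
  set (X := 1 - c * A) in *. set (Y := c * B).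
  apply Rle_trans with (sqrt (X ^ 2)).
  - rewrite sqrt_pow2 by lra. lra.
  - apply sqrt_le_1_alt. assert (0 <= Y ^ 2) by (apply pow2_ge_0). lra.
Qed.
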